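(* Let $\eta\in\mathbb{C}$, $N\in\mathbb{N}^*$, $R_{a,b}(\lambda)=\lambda I_{a,b}+\eta\mathbb{P}_{a,b}$ on $\mathbb{C}^3\otimes\mathbb{C}^3$ ($\mathbb{P}$ the permutation), let $K$ be a $w$-simple $3\times3$ matrix, $\mathcal{H}=(\mathbb{C}^3)^{\otimes N}$, and $T_1^{(K)}(\lambda)=\operatorname{tr}_a\big(K_aR_{a,N}(\lambda-\xi_N)\cdots R_{a,1}(\lambda-\xi_1)\big)$. Write $K=W_KK_JW_K^{-1}$ with $K_J=\begin{pmatrix}\mathsf k_0&\mathsf y_1&0\\0&\mathsf k_1&\mathsf y_2\\0&0&\mathsf k_2\end{pmatrix}$ an upper-triangular Jordan form, where (up to permutation of basis vectors) one of the following cases holds: (i) $\mathsf k_0,\mathsf k_1,\mathsf k_2$ pairwise distinct and $\mathsf y_1=\mathsf y_2=0$; (ii) $\mathsf k_0=\mathsf k_1\neq\mathsf k_2$, $\mathsf y_1=1$, $\mathsf y_2=0$; (iii) $\mathsf k_0=\mathsf k_1=\mathsf k_2$, $\mathsf y_1=\mathsf y_2=1$. Then for almost any choice of $\langle S|\in\mathcal{H}^*$ and of the inhomogeneities $\xi_1,\dots,\xi_N$ satisfying $\xi_a\neq\xi_b+r\eta$ for all $a\neq b$ and $r\in\{-2,-1,0,1,2\}$, the set $$\langle h_1,\dots,h_N|:=\langle S|\prod_{n=1}^N\big(T_1^{(K)}(\xi_n)\big)^{h_n},\qquad(h_1,\dots,h_N)\in\{0,1,2\}^N,$$ is a basis of $\mathcal{H}^*$.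 In particular one can take $\langle S|=\big(\bigotimes_{a=1}^N(x,y,z)_a\big)\Gamma_W^{-1}$ with $\Gamma_W=\bigotimes_{a=1}^NW_{K,a}$, requiring $xyz\neq0$ in case (i), $xz\neq0$ in case (ii), and $x\neq0$ in case (iii).
   Context: A matrix is $w$-simple if each of its eigenvalues has exactly one eigenvector up to scalar multiplication. $W_{K,a}$ denotes $W_K$ acting on the $a$-th tensor factor; $(x,y,z)_a$ is a row vector in the $a$-th factor. *)

(* Defs.v *)
From HB Require Import structures.
From mathcomp Require Import all_boot all_order all_algebra.
From mathcomp Require Import mpoly.
From mathcomp Require Import reals.
From mathcomp Require Import complex.

Set Implicit Arguments.
Unset Strict Implicit.
Unset Printing Implicit Defensive.

Import GRing.Theory Num.Theory.
Local Open Scope ring_scope.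

(* Index set of the standard basis of H = (C^3)^{(x) N}: maps 'I_N -> 'I_3. *)
Notation qidx N := {ffun 'I_N -> 'I_3}.
(* Index set of the standard basis of C^3_a (x) H (auxiliary space first). *)
Notation aidx N := ('I_3 * {ffun 'I_N -> 'I_3})%type.

Section SoV.
Variable C : fieldType.

Definition mxT (T : finType) (f : T -> T -> C) : 'M[C]_#|T| :=
  \matrix_(i, j) f (enum_val i) (enum_val j).

Definition set_at N (s : qidx N) (n : 'I_N) (b : 'I_3) : qidx N :=
  [ffun m => if m == n then b else s m].

(* R_{a,n}(mu) = mu I_{a,n} + eta P_{a,n} on C^3_a (x) H, where P_{a,n}
   permutes the auxiliary factor a with the n-th quantum factor:
   P |b, tau> = |tau_n, tau[n := b]>. *)
Definition Rmat (eta : C) N (n : 'I_N) (mu : C) : 'M[C]_#|{: aidx N}| :=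
  mxT (fun p q : aidx N =>
         mu * (p == q)%:R + eta * (p == (q.2 n, set_at q.2 n q.1))%:R).

Definition Kaux N (K : 'M[C]_3) : 'M[C]_#|{: aidx N}| :=
  mxT (fun p q : aidx N => K p.1 q.1 * (p.2 == q.2)%:R).

Definition ptrace N (M : 'M[C]_#|{: aidx N}|) : 'M[C]_#|qidx N| :=
  mxT (fun s t : qidx N =>
         \sum_(a : 'I_3) M (enum_rank ((a, s) : aidx N)) (enum_rank ((a, t) : aidx N))).

(* K_a R_{a,N}(lam - xi_N) ... R_{a,1}(lam - xi_1) *)
Definition monodromyK (eta : C) N (K : 'M[C]_3) (xi : 'I_N -> C) (lam : C)
  : 'M[C]_#|{: aidx N}| :=
  Kaux N K *m foldr (fun n M => Rmat eta n (lam - xi n) *m M) 1%:M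
                    (rev (enum 'I_N)).

Definition transferK (eta : C) N (K : 'M[C]_3) (xi : 'I_N -> C) (lam : C)
  : 'M[C]_#|qidx N| :=
  ptrace (monodromyK eta K xi lam).

Definition mxpow n (A : 'M[C]_n) (k : nat) : 'M[C]_n :=
  iter k (fun M => M *m A) 1%:M.

(* <h_1,...,h_N| = <S| prod_n T_1^{(K)}(xi_n)^{h_n}  (covectors are row vectors,
   operators act on them by right multiplication) *)
Definition sov_bra (eta : C) N (K : 'M[C]_3) (xi : 'I_N -> C)
  (S : 'rV[C]_#|qidx N|) (h : qidx N) : 'rV[C]_#|qidx N| :=
  S *m foldr (fun n M => mxpow (transferK eta K xi (xi n)) (h n) *m M) 1%:M
             (enum 'I_N).

Definition sov_basis (eta : C) N (K : 'M[C]_3) (xi : 'I_N -> C)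
  (S : 'rV[C]_#|qidx N|) : Prop :=
  basis_of fullv [seq sov_bra eta K xi S h | h <- enum {ffun 'I_N -> 'I_3}].

Definition wsimple (K : 'M[C]_3) : Prop :=
  forall a : C, eigenvalue K a -> \rank (eigenspace K a) = 1%N.

Definition KJ (k0 k1 k2 y1 y2 : C) : 'M[C]_3 :=
  \matrix_(i < 3, j < 3)
    if (i == j :> nat) then
      (if (i == 0%N :> nat) then k0 else if (i == 1%N :> nat) then k1 else k2)
    else if (j == i.+1 :> nat) then
      (if (i == 0%N :> nat) then y1 else y2)
    else 0.

Definition jcase1 (k0 k1 k2 y1 y2 : C) : Prop :=
  [/\ k0 != k1, k0 != k2, k1 != k2, y1 = 0 & y2 = 0].
Definition jcase2 (k0 k1 k2 y1 y2 : C) : Prop :=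
  [/\ k0 = k1, k1 != k2, y1 = 1 & y2 = 0].
Definition jcase3 (k0 k1 k2 y1 y2 : C) : Prop :=
  [/\ k0 = k1, k1 = k2, y1 = 1 & y2 = 1].

Definition admissible (eta : C) N (xi : 'I_N -> C) : Prop :=
  forall a b : 'I_N, a != b ->
  forall r : int, (-2 <= r <= 2)%R -> xi a != xi b + r%:~R * eta.

Definition GammaW N (W : 'M[C]_3) : 'M[C]_#|qidx N| :=
  mxT (fun s t : qidx N => \prod_(n < N) W (s n) (t n)).

Definition prod_covec N (x y z : C) : 'rV[C]_#|qidx N| :=
  \row_i \prod_(n < N)
     (let k := (enum_val i : qidx N) n in
      if (k == 0%N :> nat) then x else if (k == 1%N :> nat) then y else z).

(* coordinates (S, xi) as a point of C^{3^N + N} *)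
Definition coords N (S : 'rV[C]_#|qidx N|) (xi : 'I_N -> C)
  : 'I_(#|qidx N| + N) -> C :=
  fun i => match split i with inl j => S 0 j | inr j => xi j end.

End SoV.

(* Main.v *)
Require Import Defs.
From HB Require Import structures.
From mathcomp Require Import all_boot all_order all_algebra.
From mathcomp Require Import mpoly.
From mathcomp Require Import reals.
From mathcomp Require Import complex.
From mathcomp Require Import ring.

Set Implicit Arguments.
Unset Strict Implicit.
Unset Printing Implicit Defensive.
Import GRing.Theory Num.Theory.
Local Open Scope ring_scope.


Section Gen.
Variable A : comNzRingType.
Variable N : nat.

Definition mxTg (T : finType) (f : T -> T -> A) : 'M[A]_#|T| :=
  \matrix_(i, j) f (enum_val i) (enum_val j).
Definition Rmatg (eta : A) (n : 'I_N) (mu : A) : 'M[A]_#|{: aidx N}| :=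
  mxTg (fun p q : aidx N =>
         mu * (p == q)%:R + eta * (p == (q.2 n, set_at q.2 n q.1))%:R).
Definition Kauxg (K : 'M[A]_3) : 'M[A]_#|{: aidx N}| :=
  mxTg (fun p q : aidx N => K p.1 q.1 * (p.2 == q.2)%:R).
Definition ptraceg (M : 'M[A]_#|{: aidx N}|) : 'M[A]_#|qidx N| :=
  mxTg (fun s t : qidx N =>
         \sum_(a : 'I_3) M (enum_rank ((a, s) : aidx N)) (enum_rank ((a, t) : aidx N))).
Definition transg (eta : A) (K : 'M[A]_3) (xi : 'I_N -> A) (lam : A) :=
  ptraceg (Kauxg K *m foldr (fun n M => Rmatg eta n (lam - xi n) *m M) 1%:M
                    (rev (enum 'I_N))).
Definition mxpowg n (M : 'M[A]_n) k := iter k (fun X => X *m M) 1%:M.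
Definition bra (S : 'rV[A]_#|qidx N|) (T : 'I_N -> 'M[A]_#|qidx N|) (h : qidx N) :=
  S *m foldr (fun n M => mxpowg (T n) (h n) *m M) 1%:M (enum 'I_N).
Definition rowsM S T : 'M[A]_#|qidx N| := \matrix_(i, j) bra S T (enum_val i) 0 j.
Definition G (F : 'I_N -> 'M[A]_3) : 'M[A]_#|qidx N| :=
  mxTg (fun s t : qidx N => \prod_(m < N) F m (s m) (t m)).
Lemma eq_mxTg (T : finType) (F F' : T -> T -> A) :
  (forall s t, F s t = F' s t) -> mxTg F = mxTg F'.
Proof. by move=> e; apply/matrixP=> i j; rewrite !mxE e. Qed.
End Gen.

Lemma transK (C : fieldType) eta N (K : 'M[C]_3) xi lam :
  transferK eta K xi lam = transg (N:=N) eta K xi lam.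
Proof. reflexivity. Qed.

Lemma sov_braE (C : fieldType) eta N (K : 'M[C]_3) xi S h :
  sov_bra eta K xi S h = bra S (fun n : 'I_N => transg eta K xi (xi n)) h.
Proof. reflexivity. Qed.

Lemma GammaWE (C : fieldType) N (W : 'M[C]_3) : GammaW N W = G (fun _ => W).
Proof. reflexivity. Qed.


Section Morph.
Variables (A B : comNzRingType) (f : {rmorphism A -> B}) (N : nat).

Lemma map_mxTg (T : finType) (F : T -> T -> A) :
  map_mx f (mxTg F) = mxTg (fun s t => f (F s t)).
Proof. by apply/matrixP=> i j; rewrite !mxE. Qed.

Lemma fmapE m n (M : 'M[A]_(m,n)) i j : f (M i j) = map_mx f M i j.
Proof. by rewrite mxE. Qed.

Lemma map_mx1g n : map_mx f (1%:M : 'M[A]_n) = 1%:M.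
Proof. by apply/matrixP=> i j; rewrite !mxE rmorph_nat. Qed.

Lemma map_transg eta K xi lam :
  map_mx f (transg (N:=N) eta K xi lam) =
  transg (f eta) (map_mx f K) (fun n => f (xi n)) (f lam).
Proof.
rewrite /transg /ptraceg map_mxTg; apply: eq_mxTg => s t.
rewrite rmorph_sum; apply: eq_bigr=> a _.
rewrite fmapE map_mxM; congr (_ _ _).
congr mulmx; first by rewrite /Kauxg map_mxTg; apply: eq_mxTg => ? ?; rewrite rmorphM rmorph_nat mxE.
elim: (rev _) => [|n l IH] /=; first exact: map_mx1g.
rewrite map_mxM IH; congr mulmx.
by rewrite /Rmatg map_mxTg; apply: eq_mxTg => ? ?; rewrite rmorphD !rmorphM !rmorph_nat rmorphB.
Qed.

Lemma map_mxpowg n (M : 'M[A]_n) k : map_mx f (mxpowg M k) = mxpowg (map_mx f M) k.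
Proof. elim: k => [|k IH] /=; [exact: map_mx1g | by rewrite map_mxM IH]. Qed.

Lemma map_bra S T h :
  map_mx f (bra (N:=N) S T h) = bra (map_mx f S) (fun n => map_mx f (T n)) h.
Proof.
rewrite /bra map_mxM; congr mulmx; elim: (enum _) => [|n l IH] /=; first exact: map_mx1g.
by rewrite map_mxM IH map_mxpowg.
Qed.

Lemma map_rowsM S T :
  map_mx f (rowsM (N:=N) S T) = rowsM (map_mx f S) (fun n => map_mx f (T n)).
Proof.
apply/matrixP=> i j; rewrite [LHS]mxE [in LHS]mxE [RHS]mxE -map_bra [in RHS]mxE //.
Qed.

Lemma map_G F : map_mx f (G (N:=N) F) = G (fun m => map_mx f (F m)).
Proof.
rewrite /G map_mxTg; apply: eq_mxTg => ? ?; rewrite rmorph_prod.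
by apply: eq_bigr => m _; rewrite mxE.
Qed.
End Morph.


Section GL.
Variables (A : comNzRingType) (N : nat).

Lemma sum_enum (T : finType) (F : T -> A) :
  \sum_(k < #|T|) F (enum_val k) = \sum_(t : T) F t.
Proof. by rewrite -(big_enum_val (A:=T)) /=. Qed.

Lemma G_mul (F H : 'I_N -> 'M[A]_3) : G (N:=N) F *m G H = G (fun m => F m *m H m).
Proof.
apply/matrixP=> i j; rewrite !mxE.
rewrite (eq_bigr (fun m => \sum_k F m (enum_val i m) k * H m k (enum_val j m))); last first.
  by move=> m _; rewrite mxE.
rewrite bigA_distr_bigA /=.
rewrite -(sum_enum (fun g : qidx N => \prod_m (F m (enum_val i m) (g m) * H m (g m) (enum_val j m)))).
apply: eq_bigr => k _; rewrite !mxE big_split /=. by [].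
Qed.

Lemma eq_G (F F' : 'I_N -> 'M[A]_3) : (forall m, F m = F' m) -> G F = G F'.
Proof. by move=> e; apply: eq_mxTg => s t; apply: eq_bigr => m _; rewrite e. Qed.

Lemma G1 : G (N:=N) (fun _ => 1%:M : 'M[A]_3) = 1%:M.
Proof.
apply/matrixP=> i j; rewrite !mxE.
have [->|nij] := eqVneq i j.
  by apply: big1 => m _; rewrite mxE eqxx.

have nev : enum_val i != enum_val j by apply: contra nij => /eqP/enum_val_inj ->.
case: (pickP (fun m => enum_val i m != enum_val j m)) => [m nm|alleq]; last first.
  by case/eqP: nev; apply/ffunP => m; apply/eqP; move: (alleq m) => /= /negbFE.
by rewrite (bigD1 m) //= mxE (negPf nm) mul0r.
Qed.

Lemma mxpow_G (F : 'I_N -> 'M[A]_3) k :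
  mxpowg (G F) k = G (fun m => mxpowg (F m) k).
Proof.
elim: k => [|k IH] /=; first by rewrite -G1.
by rewrite IH G_mul.
Qed.

Definition site (n : 'I_N) (K : 'M[A]_3) := fun m : 'I_N => if m == n then K else 1%:M.

Lemma mxpowg1 n k : mxpowg (1%:M : 'M[A]_n) k = 1%:M.
Proof. by elim: k => //= k ->; rewrite mul1mx. Qed.

Lemma foldr_site (K : 'M[A]_3) (h : qidx N) (l : seq 'I_N) : uniq l ->
  foldr (fun n M => mxpowg (G (site n K)) (h n) *m M) 1%:M l =
  G (fun m => if m \in l then mxpowg K (h m) else 1%:M).
Proof.
elim: l => [|n l IH] /=.
  by move=> _; rewrite -G1.
case/andP=> nl ul; rewrite IH // mxpow_G G_mul; apply: eq_G => m.
rewrite /site in_cons; have [->|nmn] := eqVneq m n.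
  by rewrite (negPf nl) mulmx1.
by rewrite mxpowg1 mul1mx.
Qed.

Definition rowG (v : 'I_N -> 'rV[A]_3) : 'rV[A]_#|qidx N| :=
  \row_t \prod_m v m 0 ((enum_val t : qidx N) m).

Lemma rowG_mul (v : 'I_N -> 'rV[A]_3) (F : 'I_N -> 'M[A]_3) :
  rowG v *m G F = rowG (fun m => v m *m F m).
Proof.
apply/rowP=> j; rewrite !mxE.
rewrite (eq_bigr (fun m => \sum_k v m 0 k * F m k (enum_val j m))); last first.
  by move=> m _; rewrite mxE.
rewrite bigA_distr_bigA /=.
rewrite -(sum_enum (fun g : qidx N => \prod_m (v m 0 (g m) * F m (g m) (enum_val j m)))).
by apply: eq_bigr => k _; rewrite !mxE big_split.
Qed.

Lemma rowG_row (V : 'M[A]_3) (h : qidx N) :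
  rowG (fun m => row (h m) V) = row (enum_rank h) (G (fun _ => V)).
Proof. by apply/rowP=> j; rewrite !mxE enum_rankK; apply: eq_bigr => m _; rewrite mxE. Qed.

Definition Pmat (n : 'I_N) : 'M[A]_#|{: aidx N}| :=
  mxTg (fun p q : aidx N => (p == (q.2 n, set_at q.2 n q.1))%:R).

Lemma ptrace_KP (K : 'M[A]_3) (n : 'I_N) : ptraceg (Kauxg N K *m Pmat n) = G (site n K).
Proof.
apply/matrixP=> i j; rewrite !mxE.
set s := enum_val i; set t := enum_val j.
rewrite (eq_bigr (fun a => K a (t n) * (s == set_at t n a)%:R)); last first.
  move=> a _; rewrite mxE.
  transitivity (\sum_(q : aidx N) K a q.1 * (s == q.2)%:R * (q == (t n, set_at t n a))%:R).
    rewrite -(sum_enum (fun q : aidx N => K a q.1 * (s == q.2)%:R * (q == (t n, set_at t n a))%:R)).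
    by apply: eq_bigr => k _; rewrite !mxE !enum_rankK.
  rewrite (bigD1 (t n, set_at t n a)) //= eqxx mulr1 big1 ?addr0 //.
  by move=> q nq; rewrite (negPf nq) mulr0.
rewrite (bigD1 (s n)) //= big1 ?addr0; last first.
  move=> a na; case: eqP => [e|]; last by rewrite mulr0.
  by move: na; rewrite e /set_at ffunE eqxx eqxx.
rewrite (bigD1 n) //= {1}/site eqxx; congr (_ * _).
have [e|ne] := eqVneq s (set_at t n (s n)).
  rewrite big1 // => m nm; rewrite /site (negPf nm) mxE.
  by rewrite {1}e /set_at ffunE (negPf nm) eqxx.
case: (pickP (fun m => s m != set_at t n (s n) m)) => [m nm|alleq]; last first.
  by case/eqP: ne; apply/ffunP => m; apply/eqP; move: (alleq m) => /= /negbFE.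
have mn : m != n by apply: contra nm => /eqP ->; rewrite /set_at ffunE eqxx.
rewrite (bigD1 m) //= /site (negPf mn) mxE.
move: nm; rewrite /set_at ffunE (negPf mn) => /negPf ->; by rewrite mul0r.
Qed.
End GL.


Section Lin.
Variables (A : comNzRingType) (N : nat).
Local Notation n0 := #|{: aidx N}|.

Lemma Rmat_split (eta : A) (m : 'I_N) mu :
  Rmatg eta m mu = mu *: 1%:M + eta *: Pmat A m.
Proof.
apply/matrixP=> i j; rewrite !mxE (inj_eq enum_val_inj).
by rewrite mulr_natr.
Qed.

Lemma foldr_mulmx (I : Type) (R : I -> 'M[A]_n0) (l : seq I) (M : 'M[A]_n0) :
  foldr (fun m X => R m *m X) M l = foldr (fun m X => R m *m X) 1%:M l *m M.
Proof. by elim: l => [|m l IH] /=; [rewrite mul1mx | rewrite IH mulmxA]. Qed.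

Lemma prod_lin (I : Type) (x : A) (a : I -> A) (B : I -> 'M[A]_n0) (l : seq I) :
  exists J, foldr (fun m X => (a m *: 1%:M + x *: B m) *m X) 1%:M l =
            (\prod_(m <- l) a m) *: 1%:M + x *: J.
Proof.
elim: l => [|m l [J IH]] /=.
  by exists 0; rewrite big_nil scale1r scaler0 addr0.
exists (a m *: J + (\prod_(m <- l) a m) *: B m + x *: (B m *m J)).
rewrite IH big_cons mulmxDl !mulmxDr -!scalemxAl -!scalemxAr !mul1mx !mulmx1.
rewrite !scalerA !scalerDr !scalerA [x * a m]mulrC [x * (\prod_(j <- l) a j)]mulrC.
by rewrite !addrA.
Qed.

Lemma foldr_ext (I T : Type) (f g : I -> T -> T) z (l : seq I) :
  (forall m X, f m X = g m X) -> foldr f z l = foldr g z l.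
Proof. by move=> e; elim: l => //= m l ->. Qed.

Lemma three_prod (x a1 a2 : A) (J1 J2 P : 'M[A]_n0) :
  exists Z, (a1 *: 1%:M + x *: J1) *m ((x *: P) *m (a2 *: 1%:M + x *: J2)) =
            x *: ((a1 * a2) *: P + x *: Z).
Proof.
exists (a1 *: (P *m J2) + a2 *: (J1 *m P) + x *: (J1 *m (P *m J2))).
rewrite !mulmxDl !mulmxDr -!scalemxAl -!scalemxAr !mul1mx !mulmx1 -?scalemxAl -?scalemxAr.
rewrite !scalerDr !scalerA.
have -> : a1 * (x * a2) = x * (a1 * a2) by rewrite mulrCA.
have -> : a1 * (x * x) = x * x * a1 by rewrite mulrC.
by rewrite !addrA.
Qed.

Lemma ptraceD (M1 M2 : 'M[A]_n0) : ptraceg (M1 + M2) = ptraceg M1 + ptraceg M2.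
Proof. by apply/matrixP=> i j; rewrite !mxE -big_split; apply: eq_bigr => a _; rewrite mxE. Qed.

Lemma ptraceZ (c : A) (M : 'M[A]_n0) : ptraceg (c *: M) = c *: ptraceg M.
Proof. by apply/matrixP=> i j; rewrite !mxE mulr_sumr; apply: eq_bigr => a _; rewrite mxE. Qed.

Lemma trans_struct (x e : A) (K : 'M[A]_3) (xi : 'I_N -> A) (n : 'I_N) :
  exists l1 l2 J, [/\ n \notin l1, n \notin l2 &
  transg (x * e) K xi (xi n) = x *: (((\prod_(m <- l1) (xi n - xi m)) *
       (\prod_(m <- l2) (xi n - xi m)) * e) *: G (site n K) + x *: J)].
Proof.
have: n \in rev (enum 'I_N) by rewrite mem_rev mem_enum.
have: uniq (rev (enum 'I_N)) by rewrite rev_uniq enum_uniq.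
rewrite /transg; move: (rev _) => l ul nl.
case/splitPr: nl ul => l1 l2; rewrite cat_uniq /= => /and3P[_ nh /andP[nl2 _]].
have nl1 : n \notin l1 by move: nh; rewrite negb_or => /andP[].
set RE := fun m => (xi n - xi m) *: (1%:M : 'M[A]_n0) + x *: (e *: Pmat A m).
have eR : forall m, Rmatg (x * e) m (xi n - xi m) = RE m.
  by move=> m; rewrite Rmat_split /RE scalerA.
rewrite foldr_cat /= foldr_mulmx.
rewrite (foldr_ext _ _ (g := fun m X => RE m *m X)); last by move=> m X; rewrite eR.
rewrite [X in _ *m (_ *m (_ *m X))](foldr_ext _ _ (g := fun m X => RE m *m X)); last by move=> m X; rewrite eR.
have [J1 ->] := prod_lin x (fun m => xi n - xi m) (fun m => e *: Pmat A m) l1.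
have [J2 ->] := prod_lin x (fun m => xi n - xi m) (fun m => e *: Pmat A m) l2.
rewrite eR /RE subrr scale0r add0r.
have [Z ->] := three_prod x (\prod_(m <- l1) (xi n - xi m)) (\prod_(m <- l2) (xi n - xi m)) J1 J2 (e *: Pmat A n).
exists l1, l2, (ptraceg (Kauxg N K *m Z)); split => //.
rewrite -scalemxAr ptraceZ mulmxDr ptraceD -!scalemxAr !ptraceZ ptrace_KP.
by rewrite scalerA.
Qed.
End Lin.


Section Scale.
Variables (A : comNzRingType) (N : nat).

Lemma mxpowgZ n (a : A) (M : 'M[A]_n) k : mxpowg (a *: M) k = a ^+ k *: mxpowg M k.
Proof.
elim: k => [|k IH] /=; first by rewrite scale1r.
by rewrite IH -scalemxAl -scalemxAr scalerA exprSr.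
Qed.

Lemma braZ S (a : 'I_N -> A) T h :
  bra S (fun n => a n *: T n) h = (\prod_(n <- enum 'I_N) a n ^+ h n) *: bra S T h.
Proof.
rewrite /bra scalemxAr; congr mulmx.
elim: (enum _) => [|n l IH] /=; first by rewrite big_nil scale1r.
by rewrite IH mxpowgZ big_cons -scalemxAl -scalemxAr scalerA.
Qed.

Lemma rowsME (S : 'rV[A]_#|qidx N|) T i j : rowsM (N:=N) S T i j = bra S T (enum_val i) 0 j.
Proof. by rewrite mxE. Qed.

Lemma rowsMZ S (a : 'I_N -> A) T :
  rowsM S (fun n => a n *: T n) =
  diag_mx (\row_i \prod_(n <- enum 'I_N) a n ^+ (enum_val i : qidx N) n) *m rowsM S T.
Proof.
apply/matrixP=> i j; rewrite mul_diag_mx [RHS]mxE !rowsME braZ [LHS]mxE.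
by rewrite [in RHS]mxE.
Qed.
End Scale.

Section Field.
Variables (C : fieldType) (N : nat).
Local Notation n0 := #|{: aidx N}|.

Lemma Rmat_div (eta : C) (m : 'I_N) mu u : u != 0 ->
  Rmatg eta m (mu / u) = u^-1 *: Rmatg (u * eta) m mu.
Proof.
move=> u0; by rewrite !Rmat_split scalerDr !scalerA mulKf // mulrC.
Qed.

Lemma foldr_scale (I : Type) (s : C) (R : I -> 'M[C]_n0) (l : seq I) :
  foldr (fun m X => (s *: R m) *m X) 1%:M l = s ^+ size l *: foldr (fun m X => R m *m X) 1%:M l.
Proof.
elim: l => [|m l IH] /=; first by rewrite scale1r.
by rewrite IH -scalemxAl -scalemxAr scalerA exprS.
Qed.

Lemma trans_homog (eta : C) K (c : 'I_N -> C) (n : 'I_N) u : u != 0 ->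
  transg eta K (fun m => c m / u) (c n / u) = (u^-1) ^+ N *: transg (u * eta) K c (c n).
Proof.
move=> u0; rewrite /transg -ptraceZ scalemxAr; congr (ptraceg (_ *m _)).
rewrite (foldr_ext _ _ (g := fun m X => (u^-1 *: Rmatg (u * eta) m (c n - c m)) *m X)).
  by rewrite foldr_scale size_rev size_enum_ord.
by move=> m X; rewrite -mulrBl Rmat_div.
Qed.

Lemma G_unit (F : 'I_N -> 'M[C]_3) : (forall m, F m \in unitmx) ->
  G F \in unitmx /\ invmx (G F) = G (fun m => invmx (F m)).
Proof.
move=> Fu.
have e : G F *m G (fun m => invmx (F m)) = 1%:M.
  by rewrite G_mul -G1; apply: eq_G => m; rewrite mulmxV.
have [u1 _] := mulmx1_unit e; split => //.
by rewrite -[invmx _]mulmx1 -e mulmxA mulVmx // mul1mx.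
Qed.

Lemma mxpow_conj (W X : 'M[C]_3) k : W \in unitmx ->
  mxpowg (W *m X *m invmx W) k = W *m mxpowg X k *m invmx W.
Proof.
move=> Wu; elim: k => [|k IH] /=; first by rewrite mulmx1 mulmxV.
by rewrite IH !mulmxA -[W *m mxpowg X k *m invmx W *m W]mulmxA mulVmx // mulmx1.
Qed.

Lemma limit_unit (w : 'rV[C]_3) (W KJm : 'M[C]_3) :
  W \in unitmx ->
  (\matrix_(k < 3, j < 3) (w *m mxpowg KJm k) 0 j) \in unitmx ->
  rowsM (rowG (fun _ : 'I_N => w) *m invmx (G (fun _ : 'I_N => W)))
        (fun n => G (site n (W *m KJm *m invmx W))) \in unitmx.
Proof.
set V := \matrix_(k < 3, j < 3) _ => Wu Vu.
have [GWu GWi] := G_unit (F := fun _ => W) (fun _ => Wu).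
have [GVu _] := G_unit (F := fun _ => V) (fun _ => Vu).
have Wiu : invmx W \in unitmx by rewrite unitmx_inv.
have [GWiu _] := G_unit (F := fun _ => invmx W) (fun _ => Wiu).
suff -> : rowsM (rowG (fun _ : 'I_N => w) *m invmx (G (fun _ : 'I_N => W)))
        (fun n => G (site n (W *m KJm *m invmx W))) = G (fun _ => V) *m G (fun _ => invmx W).
  by rewrite unitmx_mul GVu.
apply/matrixP=> i j; rewrite rowsME; set h := enum_val i.
have -> : bra (rowG (fun _ : 'I_N => w) *m invmx (G (fun _ : 'I_N => W)))
        (fun n => G (site n (W *m KJm *m invmx W))) h =
        row (enum_rank h) (G (fun _ => V)) *m G (fun _ => invmx W).
  rewrite /bra foldr_site ?enum_uniq //.
  rewrite [G (fun m => if _ then _ else _)](eq_G (F' := fun m => mxpowg (W *m KJm *m invmx W) (h m))); last by move=> m; rewrite mem_enum.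
  rewrite GWi -mulmxA G_mul.
  rewrite [G (fun m => invmx W *m _)](eq_G (F' := fun m => mxpowg KJm (h m) *m invmx W)); last first.
    by move=> m; rewrite mxpow_conj // !mulmxA mulVmx // mul1mx.
  rewrite -G_mul mulmxA rowG_mul -rowG_row; congr (_ *m _).
  by apply/rowP => t; rewrite !mxE; apply: eq_bigr => m _; rewrite !mxE.
by rewrite enum_valK -row_mul mxE.
Qed.
End Field.


Lemma rows_basis (C : fieldType) N (S : 'rV[C]_#|qidx N|) T :
  rowsM S T \in unitmx ->
  basis_of fullv [seq bra S T h | h <- enum {ffun 'I_N -> 'I_3}].
Proof.
set M := rowsM S T => Mu; set X := [seq _ | h <- _].
have sp : (fullv <= <<X>>)%VS.
  apply/subvP => v _.
  have -> : v = (v *m invmx M) *m M by rewrite -mulmxA mulVmx // mulmx1.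
  rewrite mulmx_sum_row; apply: memv_suml => i _; apply: memvZ.
  have -> : row i M = bra S T (enum_val i) by apply/rowP => j; rewrite mxE rowsME.
  by apply: memv_span; apply: map_f; rewrite mem_enum.
have eqf : <<X>>%VS = fullv by apply/eqP; rewrite eqEsubv subvf sp.
rewrite /basis_of eqf eqxx /= /free eqf dimvf dim_matrix.
by apply/eqP; rewrite size_map -cardE; exact: mul1n.
Qed.

Lemma poly_nonroot (C : numFieldType) (p : {poly C}) : p != 0 ->
  exists u : C, u != 0 /\ p.[u] != 0.
Proof.
move=> p0; set s := [seq (k.+1)%:R : C | k <- iota 0 (size p)].
case: (boolP (all (root p) s)) => [allr | /allPn [u us nr]].
  have := max_poly_roots p0 allr.
  rewrite map_inj_uniq ?iota_uniq; last by move=> a b /eqP; rewrite eqr_nat => /eqP [].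
  by move=> /(_ isT); rewrite size_map size_iota ltnn.
exists u; split => //.
by case/mapP: us => k _ ->; rewrite pnatr_eq0.
Qed.


Section Det3.
Variable R : comNzRingType.

Lemma det33 (f : nat -> nat -> R) :
  \det (\matrix_(i < 3, j < 3) f i j) =
  f 0 0 * (f 1 1 * f 2 2 - f 1 2 * f 2 1)
  - f 0 1 * (f 1 0 * f 2 2 - f 1 2 * f 2 0)
  + f 0 2 * (f 1 0 * f 2 1 - f 1 1 * f 2 0).
Proof.
rewrite (expand_det_row _ ord0) !big_ord_recl big_ord0 /cofactor.
rewrite !(expand_det_row _ ord0) !big_ord_recl !big_ord0 /cofactor !det_mx11 !mxE /=.
rewrite /bump /=. ring.
Qed.
End Det3.

Section VU.
Variable C : fieldType.

Definition wv (x y z : C) : 'rV[C]_3 :=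
  \row_(k < 3) (if (k == 0%N :> nat) then x else if (k == 1%N :> nat) then y else z).

Definition ordn (j : nat) : 'I_3 :=
  match j with 0 => @Ordinal 3 0 isT | 1 => @Ordinal 3 1 isT | _ => @Ordinal 3 2 isT end.

Lemma V_det (x y z k0 k1 k2 y1 y2 : C) :
  \det (\matrix_(k < 3, j < 3) (wv x y z *m mxpowg (KJ k0 k1 k2 y1 y2) k) 0 j) =
  let f := fun i j => (wv x y z *m mxpowg (KJ k0 k1 k2 y1 y2) i) 0 (ordn j) in
  f 0 0 * (f 1 1 * f 2 2 - f 1 2 * f 2 1)
  - f 0 1 * (f 1 0 * f 2 2 - f 1 2 * f 2 0)
  + f 0 2 * (f 1 0 * f 2 1 - f 1 1 * f 2 0).
Proof.
pose f := fun i j => (wv x y z *m mxpowg (KJ k0 k1 k2 y1 y2) i) 0 (ordn j).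
transitivity (\det (\matrix_(i < 3, j < 3) f i j)); last exact: det33.
congr (\det _); apply/matrixP => i j; rewrite [LHS]mxE [RHS]mxE /f.
by case: j => [[|[|[|]]] ?] //=; f_equal; apply: val_inj.
Qed.

Lemma V_unit (x y z k0 k1 k2 y1 y2 : C) :
  (jcase1 k0 k1 k2 y1 y2 -> x * y * z != 0) ->
  (jcase2 k0 k1 k2 y1 y2 -> x * z != 0) ->
  (jcase3 k0 k1 k2 y1 y2 -> x != 0) ->
  jcase1 k0 k1 k2 y1 y2 \/ jcase2 k0 k1 k2 y1 y2 \/ jcase3 k0 k1 k2 y1 y2 ->
  (\matrix_(k < 3, j < 3) (wv x y z *m mxpowg (KJ k0 k1 k2 y1 y2) k) 0 j) \in unitmx.
Proof.
move=> h1 h2 h3 hc; rewrite unitmxE unitfE V_det /=.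
rewrite !mul1mx !mxE !big_ord_recr !big_ord0 /= !mxE /= !big_ord_recr !big_ord0 /= !mxE /=.
have key : forall a P : C, a = P -> P != 0 -> a != 0 by move=> a P ->.
case: hc => [[n01 n02 n12 e1 e2] | [[e01 n12 e1 e2] | [e01 e12 e1 e2]]].
- have hh := h1 (And5 n01 n02 n12 e1 e2); rewrite e1 e2 in h1 *.
  apply: (key _ (x * y * z * ((k1 - k0) * (k2 - k0) * (k2 - k1)))); first by ring.
  rewrite !mulf_eq0 !negb_or in hh; case/andP: hh => /andP[hx hy] hz.
  by rewrite !mulf_neq0 // subr_eq0 // eq_sym.
- have hh := h2 (And4 e01 n12 e1 e2); rewrite e01 e1 e2.
  apply: (key _ (x * z * x * ((k2 - k1) * (k2 - k1)))); first by ring.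
  rewrite !mulf_eq0 !negb_or in hh; case/andP: hh => hx hz.
  by rewrite !mulf_neq0 // subr_eq0 eq_sym.
- have hh := h3 (And4 e01 e12 e1 e2); rewrite e01 e12 e1 e2.
  apply: (key _ (x * x * x)); first by ring.
  by rewrite !mulf_neq0.
Qed.
End VU.


Lemma eq_bra (A : comNzRingType) N (S : 'rV[A]_#|qidx N|) T T' h :
  (forall n, T n = T' n) -> bra S T h = bra S T' h.
Proof. by move=> e; rewrite /bra; congr mulmx; elim: (enum _) => //= n l ->; rewrite e. Qed.

Lemma eq_rowsM (A : comNzRingType) N (S : 'rV[A]_#|qidx N|) T T' :
  (forall n, T n = T' n) -> rowsM S T = rowsM S T'.
Proof. by move=> e; apply/matrixP=> i j; rewrite !rowsME (eq_bra _ _ e). Qed.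

Lemma diag_unit (C : fieldType) N (d : 'I_N -> C) :
  (forall n, d n != 0) ->
  diag_mx (\row_(i < #|qidx N|) \prod_(n <- enum 'I_N) d n ^+ (enum_val i : qidx N) n) \in unitmx.
Proof.
move=> dn; rewrite unitmxE det_diag unitfE; apply/prodf_neq0 => i _.
by rewrite mxE prodf_seq_neq0; apply/allP => n _; rewrite expf_neq0.
Qed.

Lemma mapE (A B : Type) (f : A -> B) m n (M : 'M[A]_(m,n)) i j : map_mx f M i j = f (M i j).
Proof. by rewrite mxE. Qed.

Lemma eq_transg (A : comNzRingType) N eta (K : 'M[A]_3) (xi xi' : 'I_N -> A) lam :
  (forall m, xi m = xi' m) -> transg eta K xi lam = transg eta K xi' lam.
Proof.
move=> e; rewrite /transg; congr (ptraceg (_ *m _)).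
by apply: foldr_ext => m X; rewrite e.
Qed.

Section Good.
Variables (C : numFieldType) (N : nat).

Lemma good_point (eta : C) (K W KJm : 'M[C]_3) (w : 'rV[C]_3) :
  eta != 0 -> W \in unitmx -> K = W *m KJm *m invmx W ->
  (\matrix_(k < 3, j < 3) (w *m mxpowg KJm k) 0 j) \in unitmx ->
  exists xi : 'I_N -> C,
   rowsM (rowG (fun _ => w) *m invmx (G (fun _ => W))) (fun n => transg eta K xi (xi n)) \in unitmx.
Proof.
move=> eta0 Wu eK Vu.
set S := rowG _ *m _.
pose c : 'I_N -> C := fun m => (m : nat)%:R.
have cinj : forall m m', c m = c m' -> m = m'.
  by move=> m m' /eqP; rewrite eqr_nat => /eqP; apply: val_inj.
pose KA := map_mx polyC K; pose SA := map_mx polyC S.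
pose xiA := fun m => (c m)%:P.
pose TA := fun n => transg ('X * eta%:P) KA xiA (xiA n).
have st : forall n, exists dJ : C * 'M[{poly C}]_#|qidx N|,
    dJ.1 != 0 /\ TA n = 'X *: ((dJ.1)%:P *: G (site n KA) + 'X *: dJ.2).
  move=> n; rewrite /TA; have [l1 [l2 [J [n1 n2 ->]]]] := trans_struct 'X (eta%:P) KA xiA n.
  exists ((\prod_(m <- l1) (c n - c m)) * (\prod_(m <- l2) (c n - c m)) * eta, J); split.
    rewrite /= !mulf_neq0 // prodf_seq_neq0; apply/allP => m ml /=; rewrite subr_eq0;
      apply/negP => /eqP /cinj e; [by move: n1; rewrite e ml | by move: n2; rewrite e ml].
  rewrite /= !polyCM !rmorph_prod; congr (_ *: ((_ * _ * _) *: _ + _));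
    by apply: eq_bigr => m _; rewrite ?polyCB ?rmorphB.
have [dJ hdJ] := fin_all_exists st.
pose T' := fun n => (dJ n).1%:P *: G (site n KA) + 'X *: (dJ n).2.
have eM : rowsM SA TA = diag_mx (\row_(i < #|qidx N|) \prod_(n <- enum 'I_N) 'X ^+ (enum_val i : qidx N) n) *m rowsM SA T'.
  by rewrite -rowsMZ; apply: eq_rowsM => n; case: (hdJ n).
pose p := \det (rowsM SA T').
have mapS : forall u, map_mx (horner_eval u) SA = S.
  by move=> u; apply/matrixP => i j; rewrite !mapE /= horner_evalE hornerC.
have mapK : forall u, map_mx (horner_eval u) KA = K.
  by move=> u; apply/matrixP => i j; rewrite !mapE /= horner_evalE hornerC.
have mapG : forall (u : C) (n : 'I_N), map_mx (horner_eval u) (G (site n KA)) = G (site n K).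
  move=> u n; rewrite map_G; apply: eq_G => m; rewrite /site.
  by case: eqP => _; [exact: mapK | exact: map_mx1g].
have dU : forall (d : 'I_N -> C), (forall n, d n != 0) ->
   \det (diag_mx (\row_(i < #|qidx N|) \prod_(n <- enum 'I_N) d n ^+ (enum_val i : qidx N) n)) != 0.
  by move=> d dn; rewrite -unitfE -unitmxE diag_unit.
have p0 : p.[0] != 0.
  rewrite -horner_evalE -det_map_mx map_rowsM mapS.
  rewrite (eq_rowsM _ (T' := fun n => (dJ n).1 *: G (site n K))); last first.
    move=> n; rewrite /T' map_mxD !map_mxZ mapG /= !horner_evalE hornerC hornerX scale0r addr0.
    by [].
  rewrite rowsMZ det_mulmx mulf_neq0 //; first by apply: dU => n; case: (hdJ n).
  by rewrite -unitfE -unitmxE eK limit_unit.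
have pn0 : p != 0 by apply: contra p0 => /eqP ->; rewrite horner0.
have [u [u0 pu]] := poly_nonroot pn0.
have U1 : rowsM S (fun n => transg (u * eta) K c (c n)) \in unitmx.
  have -> : rowsM S (fun n => transg (u * eta) K c (c n)) = map_mx (horner_eval u) (rowsM SA TA).
    rewrite map_rowsM mapS; apply: eq_rowsM => n; rewrite /TA map_transg mapK /= !horner_evalE.
    rewrite hornerM hornerX !hornerC; apply: eq_transg => m.
    by rewrite horner_evalE hornerC.
  rewrite eM map_mxM unitmx_mul; apply/andP; split.
    rewrite map_diag_mx unitmxE unitfE det_diag; apply/prodf_neq0 => i _.
    rewrite !mxE /= horner_evalE horner_prod prodf_seq_neq0; apply/allP => n _.
    by rewrite /= hornerXn expf_neq0.
  by rewrite unitmxE unitfE det_map_mx.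
exists (fun m => c m / u).
rewrite (eq_rowsM _ (T' := fun n => (u^-1) ^+ N *: transg (u * eta) K c (c n))); last first.
  by move=> n; rewrite trans_homog.
rewrite rowsMZ unitmx_mul U1 andbT diag_unit // => n.
by rewrite expf_neq0 // invr_eq0.
Qed.
End Good.


Unset Implicit Arguments.
Lemma prod_covecE (C : fieldType) N (x y z : C) :
  prod_covec N x y z = rowG (fun _ => wv x y z).
Proof. by apply/rowP => j; rewrite !mxE; apply: eq_bigr => m _; rewrite mxE. Qed.

Lemma unit_basis (C : fieldType) N eta (K : 'M[C]_3) (xi : 'I_N -> C) S :
  \det (rowsM S (fun n => transg eta K xi (xi n))) != 0 -> sov_basis eta K xi S.
Proof. by rewrite -unitfE -unitmxE => /rows_basis. Qed.

Theorem proposition5p3 (R : realType) (eta : R[i]) (N : nat)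
  (K W : 'M[R[i]]_3) (k0 k1 k2 y1 y2 : R[i]) :
  (0 < N)%N -> eta != 0 -> wsimple K ->
  W \in unitmx -> K = W *m KJ k0 k1 k2 y1 y2 *m invmx W ->
  jcase1 k0 k1 k2 y1 y2 \/ jcase2 k0 k1 k2 y1 y2 \/ jcase3 k0 k1 k2 y1 y2 ->
  (exists P : {mpoly R[i][#|{ffun 'I_N -> 'I_3}| + N]},
     P != 0 /\
     forall (S : 'rV[R[i]]_#|{ffun 'I_N -> 'I_3}|) (xi : 'I_N -> R[i]),
       admissible eta xi -> P.@[coords S xi] != 0 ->
       sov_basis eta K xi S)
  /\
  (forall x y z : R[i],
     (jcase1 k0 k1 k2 y1 y2 -> x * y * z != 0) ->
     (jcase2 k0 k1 k2 y1 y2 -> x * z != 0) ->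
     (jcase3 k0 k1 k2 y1 y2 -> x != 0) ->
     exists Q : {mpoly R[i][N]},
       Q != 0 /\
       forall xi : 'I_N -> R[i],
         admissible eta xi -> Q.@[xi] != 0 ->
         sov_basis eta K xi (prod_covec N x y z *m invmx (GammaW N W))).
Proof.
move=> _ eta0 _ Wu eK hc.
have good : forall x y z : R[i],
     (jcase1 k0 k1 k2 y1 y2 -> x * y * z != 0) ->
     (jcase2 k0 k1 k2 y1 y2 -> x * z != 0) ->
     (jcase3 k0 k1 k2 y1 y2 -> x != 0) ->
     exists xi : 'I_N -> R[i],
     \det (rowsM (prod_covec N x y z *m invmx (GammaW N W)) (fun n => transg eta K xi (xi n))) != 0.
  move=> x y z h1 h2 h3.
  have [xi hxi] := good_point N eta0 Wu eK (V_unit h1 h2 h3 hc).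
  by exists xi; rewrite prod_covecE GammaWE -unitfE -unitmxE.
split.
  pose n' := (#|{ffun 'I_N -> 'I_3}| + N)%N.
  pose SX : 'rV[{mpoly R[i][n']}]_#|{ffun 'I_N -> 'I_3}| := \row_j 'X_(lshift N j).
  pose xiX : 'I_N -> {mpoly R[i][n']} := fun n => 'X_(rshift #|{ffun 'I_N -> 'I_3}| n).
  pose KX := map_mx (fun a => (a%:MP : {mpoly R[i][n']})) K.
  exists (\det (rowsM SX (fun n => transg (eta%:MP : {mpoly R[i][n']}) KX xiX (xiX n)))).
  have hP : forall S xi, (\det (rowsM SX (fun n => transg (eta%:MP : {mpoly R[i][n']}) KX xiX (xiX n)))).@[coords S xi]
      = \det (rowsM S (fun n => transg eta K xi (xi n))).
    move=> S xi; rewrite -det_map_mx map_rowsM.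
    have -> : map_mx (meval (coords S xi)) SX = S.
      apply/matrixP => i j; rewrite mapE mxE (ord1 i) mevalXU /coords.
      by rewrite (unsplitK (inl _ j)).
    rewrite (eq_rowsM _ (T' := fun n => transg eta K xi (xi n))) //.
    move=> n; rewrite map_transg /= mevalC.
    have -> : map_mx (meval (coords S xi)) KX = K.
      by apply/matrixP => i j; rewrite mapE mapE mevalC.
    rewrite /xiX mevalXU /coords (unsplitK (inr _ n)); apply: eq_transg => m.
    by rewrite mevalXU (unsplitK (inr _ m)).
  split.
    have o3 : (1 : R[i]) * 1 * 1 != 0 by rewrite !mul1r oner_neq0.
    have o2 : (1 : R[i]) * 1 != 0 by rewrite !mul1r oner_neq0.
    have [xi hxi] := good 1 1 1 (fun _ => o3) (fun _ => o2) (fun _ => oner_neq0 _).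
    apply: contra hxi => /eqP P0.
    by rewrite -hP P0 meval0.
  move=> S xi _; rewrite hP => hS; exact: (@unit_basis _ _ _ _ _ _ hS).
move=> x y z h1 h2 h3.
set S := prod_covec N x y z *m invmx (GammaW N W).
pose KX := map_mx (fun a => (a%:MP : {mpoly R[i][N]})) K.
exists (\det (rowsM (map_mx (fun a => (a%:MP : {mpoly R[i][N]})) S) (fun n => transg (eta%:MP : {mpoly R[i][N]}) KX (fun m => 'X_m) 'X_n))).
have hQ : forall xi, (\det (rowsM (map_mx (fun a => (a%:MP : {mpoly R[i][N]})) S) (fun n => transg (eta%:MP : {mpoly R[i][N]}) KX (fun m => 'X_m) 'X_n))).@[xi]
      = \det (rowsM S (fun n => transg eta K xi (xi n))).
  move=> xi; rewrite -det_map_mx map_rowsM.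
  have -> : map_mx (meval xi) (map_mx (fun a => (a%:MP : {mpoly R[i][N]})) S) = S.
    by apply/matrixP => i j; rewrite mapE mapE mevalC.
  rewrite (eq_rowsM _ (T' := fun n => transg eta K xi (xi n))) //.
  move=> n; rewrite map_transg /= mevalC.
  have -> : map_mx (meval xi) KX = K.
    by apply/matrixP => i j; rewrite mapE mapE mevalC.
  rewrite mevalXU; apply: eq_transg => m.
  by rewrite mevalXU.
split.
  have [xi hxi] := good x y z h1 h2 h3.
  apply: contra hxi => /eqP Q0.
  by rewrite -hQ Q0 meval0.
move=> xi _; rewrite hQ => hS; exact: (@unit_basis _ _ _ _ _ _ hS).
Qed.
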